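(* Let $\alpha_1,\alpha_2$ be real singular $1$-cocycles on $X$ both representing $a$, and let $\beta$ be a singular $0$-cochain on $X$ (viewed as a real-valued function on $X$) with $\alpha_1-\alpha_2=d\beta$. Let $g\in G_a$ be covered by $\widehat g\in\widehat G_a$. (1) Let $x\in X$ and assume $\widehat{\mathrm{rot}}_{x,\alpha_1}(\widehat g)$ and $\widehat{\mathrm{rot}}_{x,\alpha_2}(\widehat g)$ are defined. If $\beta$ is bounded on the orbit $\{g^i(x)\}_{i\in\mathbb{N}}$, then $\widehat{\mathrm{rot}}_{x,\alpha_1}(\widehat g)=\widehat{\mathrm{rot}}_{x,\alpha_2}(\widehat g)$. (2) Let $\mu$ be a $g$-invariant Borel probability measure on $X$ and assume $\widehat{\mathrm{rot}}_{\mu,\alpha_1}(\widehat g)$ and $\widehat{\mathrm{rot}}_{\mu,\alpha_2}(\widehat g)$ are defined. If $\int_X(\beta(g(x))-\beta(x))\,d\mu(x)=0$, then $\widehat{\mathrm{rot}}_{\mu,\alpha_1}(\widehat g)=\widehat{\mathrm{rot}}_{\mu,\alpha_2}(\widehat g)$.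
   Context: $A$ is $\mathbb{Z}$ or the discrete group $\mathbb{R}$. $X$ is a path-connected space, $a\in\mathrm{H}^1(X;A)$, $\pi\colon\widehat X_a\to X$ a principal $A$-bundle with holonomy $a$, $T_r$ the action of $r\in A$. $\widehat G_a$ is the group of bundle automorphisms of $\widehat X_a$ (homeomorphisms $\widehat g$ with $\pi\circ\widehat g=g\circ\pi$ for a homeomorphism $g$ of $X$, said to cover $g$), and $G_a$ the group of homeomorphisms of $X$ preserving $a$. For a real singular $1$-cocycle $\alpha$ representing $a$, let $\theta\colon\widehat X_a\to\mathbb{R}$ be a $0$-cochain with $d\theta=\pi^*\alpha$ and $\theta(T_r\widehat y)=\theta(\widehat y)+r$; for $x\in X$, $\rho_{x,\alpha}(\widehat g)=\theta(\widehat g(\widehat x))-\theta(\widehat x)$ with $\widehat x\in\pi^{-1}(x)$ (independent of choices); $\widehat{\mathrm{rot}}_{x,\alpha}(\widehat g)=\lim_{n\to\infty}\rho_{x,\alpha}(\widehat g^n)/n$ when it exists; for a $g$-invariant Borel probability measure $\mu$, $\widehat{\mathrm{rot}}_{\mu,\alpha}(\widehat g)=\int_X\rho_{x,\alpha}(\widehat g)\,d\mu(x)$ when it exists. *)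

(* Defs.v *)
From HB Require Import structures.
From mathcomp Require Import all_boot all_order all_algebra.
From mathcomp Require Import all_classical all_reals all_analysis.
Set Implicit Arguments. Unset Strict Implicit. Unset Printing Implicit Defensive.
Import Order.TTheory GRing.Theory Num.Theory.
Import numFieldNormedType.Exports.
Local Open Scope classical_set_scope.
Local Open Scope ring_scope.

Section Simplices.
Variable R : realType.

Definition D1set : set R := `[0, 1]%classic.
Definition D2set : set (R * R) :=
  [set p | 0 <= p.1 /\ 0 <= p.2 /\ p.1 + p.2 <= 1].
Local Notation Delta1 := (set_type D1set).
Local Notation Delta2 := (set_type D2set).

Lemma D1_0 : D1set 0. Proof. by rewrite /D1set /= in_itv /= lexx ler01. Qed.
Lemma D1_1 : D1set 1. Proof. by rewrite /D1set /= in_itv /= lexx ler01. Qed.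
Lemma D2_0 : D2set (0, 0). Proof. by rewrite /D2set /= lexx addr0 ler01. Qed.

Definition d1zero : Delta1 := exist _ 0 (mem_set D1_0).
Definition d1one : Delta1 := exist _ 1 (mem_set D1_1).
Definition d2zero : Delta2 := exist _ (0, 0) (mem_set D2_0).

(** total "inclusion" of a point of R*R into Delta2 (only used on points
    that do lie in the simplex) *)
Definition toD2 (p : R * R) : Delta2 :=
  match pselect (D2set p) with
  | left h => exist _ p (mem_set h)
  | right _ => d2zero
  end.

(** The three faces Delta1 -> Delta2 (vertices e0=(0,0), e1=(1,0), e2=(0,1));
    face i omits vertex i and is the affine map preserving vertex order. *)
Definition face0 (u : Delta1) : Delta2 := toD2 (1 - set_val u, set_val u).
Definition face1 (u : Delta1) : Delta2 := toD2 (0, set_val u).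
Definition face2 (u : Delta1) : Delta2 := toD2 (set_val u, 0).
End Simplices.

Notation Delta1 R := (set_type (@D1set R)).
Notation Delta2 R := (set_type (@D2set R)).

Section Cochains.
Variables (R : realType) (X : topologicalType).

(** Singular 1-cochains: real functions on singular 1-simplices
    (continuous maps Delta1 -> X); values on non-continuous maps are junk
    and never used.  Singular 0-cochains are functions X -> R. *)
Definition cochain1 := (Delta1 R -> X) -> R.

Definition d0 (b : X -> R) (s : Delta1 R -> X) : R :=
  b (s (d1one R)) - b (s (d1zero R)).

Definition d1 (c : cochain1) (s : Delta2 R -> X) : R :=
  c (s \o face0 (R:=R)) - c (s \o face1 (R:=R)) + c (s \o face2 (R:=R)).

Definition is_cocycle1 (c : cochain1) : Prop :=
  forall s : Delta2 R -> X, continuous s -> d1 c s = 0.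


Definition cochain1_eq (c c' : cochain1) : Prop :=
  forall s : Delta1 R -> X, continuous s -> c s = c' s.

Definition path_connected : Prop :=
  forall x y : X, exists s : Delta1 R -> X,
    [/\ continuous s, s (d1zero R) = x & s (d1one R) = y].

Definition homeomorphism (f : X -> X) : Prop :=
  continuous f /\ exists h : X -> X, [/\ continuous h, cancel f h & cancel h f].
End Cochains.

(** [A : set R] is the coefficient group, Z (as the integers inside R) or the
    discrete group R.  A principal A-bundle (A discrete) pi : Xh -> X with
    action T r (r in A). *)
Definition principal_bundle (R : realType) (A : set R) (X Xh : topologicalType)
  (pi : Xh -> X) (T : R -> Xh -> Xh) : Prop :=
  [/\ continuous pi /\ (forall x, exists y, pi y = x),
      (forall r, A r -> continuous (T r)) /\
      (forall y, T 0 y = y) /\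
      (forall r s y, A r -> A s -> T (r + s) y = T r (T s y)) /\
      (forall r y, A r -> pi (T r y) = pi y),
      (forall y z, pi y = pi z -> exists r, A r /\ z = T r y) /\
      (forall r y, A r -> T r y = y -> r = 0) &
      (* local triviality: pi^-1(U) -> U x A, y |-> (pi y, phi y) is an
         A-equivariant homeomorphism, A discrete *)
      (forall x, exists U : set X, [/\ open U, U x &
        exists phi : Xh -> R,
        [/\ (forall y, U (pi y) -> A (phi y)),
            (forall r y, A r -> U (pi y) -> phi (T r y) = phi y + r),
            (forall y, U (pi y) -> \forall z \near y, phi z = phi y) &
            (forall r, A r -> forall V : set Xh, open V ->
               open (pi @` (V `&` [set y | U (pi y) /\ phi y = r])))]])].

Definition theta_for (R : realType) (A : set R) (X Xh : topologicalType)
  (pi : Xh -> X) (T : R -> Xh -> Xh) (alpha : cochain1 R X) (theta : Xh -> R)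
  : Prop :=
  (forall s : Delta1 R -> Xh, continuous s -> d0 theta s = alpha (pi \o s)) /\
  (forall r y, A r -> theta (T r y) = theta y + r).

(** rho_{x,alpha}(gh) = theta (gh xh) - theta xh, xh a lift of x *)
Definition rho (R : realType) (Xh : Type) (theta : Xh -> R) (gh : Xh -> Xh)
  (xh : Xh) : R := theta (gh xh) - theta xh.

Notation borel X := (g_sigma_algebraType (@open X)).

(* Main.v *)
Require Import Defs.
From HB Require Import structures.
From mathcomp Require Import all_boot all_order all_algebra.
From mathcomp Require Import all_classical all_reals all_analysis.
From mathcomp Require Import lra.
Import Order.TTheory GRing.Theory Num.Theory.
Import numFieldNormedType.Exports.
Local Open Scope classical_set_scope.
Local Open Scope ring_scope.

Section H.
Variable R : realType.

Definition clamp01 (x : R) : R := Num.min (Num.max x 0) 1.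
Lemma clamp01_in x : D1set (clamp01 x).
Proof.
rewrite /D1set /clamp01 /= in_itv /=; apply/andP; split.
  by rewrite le_min ler01 le_max lexx orbT.
by rewrite ge_min lexx orbT.
Qed.
Definition toD1 (x : R) : Delta1 R := exist _ (clamp01 x) (mem_set (clamp01_in x)).

Lemma clamp01_cont : continuous clamp01.
Proof.
move=> x; apply: (@continuous_min R R (fun x => Num.max x 0) (fun _ => 1)).
  apply: (@continuous_max R R id (fun _ => 0)); [exact: cvg_id|exact: cvg_cst].
exact: cvg_cst.
Qed.

Lemma toD1_cont : continuous toD1.
Proof.
apply: (@continuous_comp_initial _ _ _ (@set_val _ (@D1set R))).
exact: clamp01_cont.
Qed.

Lemma val_cont : continuous (@set_val _ (@D1set R) : Delta1 R -> R).
Proof. exact: initial_continuous. Qed.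

Lemma toD1_val x : D1set x -> set_val (toD1 x) = x.
Proof.
rewrite /D1set /= in_itv /= => /andP[h0 h1].
change (clamp01 x = x).
by rewrite /clamp01 (elimT max_idPl h0) (elimT min_idPl h1).
Qed.
Lemma D1_eq (u v : Delta1 R) : set_val u = set_val v -> u = v.
Proof. case: u v => [a ha] [b hb]; rewrite !set_valE /= => eab; subst b; congr exist; exact: Prop_irrelevance. Qed.

Lemma toD1_0 : toD1 0 = d1zero R.
Proof. apply: D1_eq; rewrite toD1_val //; exact: D1_0. Qed.
Lemma toD1_1 : toD1 1 = d1one R.
Proof. apply: D1_eq; rewrite toD1_val //; exact: D1_1. Qed.
End H.

Section Lift.
Variables (R : realType) (A : set R) (X Xh : topologicalType) (pi : Xh -> X) (T : R -> Xh -> Xh).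
Hypothesis HA : A = range (fun z : int => z%:~R) \/ A = setT.
Hypothesis Hbun : principal_bundle A pi T.

Lemma A0 : A 0.
Proof. by case: HA => ->; [exists 0%R|]. Qed.
Lemma AN r : A r -> A (- r).
Proof. by case: HA => -> //; case=> z _ <-; exists (- z)%R => //; rewrite mulrNz. Qed.

Lemma local_section (x : X) : exists U : set X, [/\ open U, U x &
  exists sec : X -> Xh, (forall x', U x' -> pi (sec x') = x') /\
    (forall x', U x' -> {for x', continuous sec})].
Proof.
case: (Hbun) => [[_ surj] [_ [_ [_ Tpi]]] [fib free] loc].
have [U [oU Ux [phi [phiA phiT _ phiO]]]] := loc x.
exists U; split => //.
have [y0 _] := surj x.
pose S y := U (pi y) /\ phi y = 0.
have ex : forall x', U x' -> exists y, pi y = x' /\ S y.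
  move=> x' Ux'; have [y py] := surj x'.
  have Ay : A (phi y) by apply: phiA; rewrite py.
  have An : A (- phi y) := @AN (phi y) Ay.
  exists (T (- phi y) y); split; first by rewrite Tpi.
  split; first by rewrite Tpi // py.
  by rewrite phiT // ?py // subrr.
have inj : forall a b, S a -> S b -> pi a = pi b -> a = b.
  move=> a b [Ua pa] [Ub pb] pab; have [r [Ar eb]] := fib _ _ pab; subst b.
  move: pb; rewrite phiT // pa add0r => r0; subst r.
  by case: Hbun => _ [_ [T0 _]] _ _; rewrite T0.
pose sec x' := match pselect (exists y, pi y = x' /\ S y) with
  | left h => sval (cid h) | right _ => y0 end.
have secP : forall x', U x' -> pi (sec x') = x' /\ S (sec x').
  move=> x' Ux'; rewrite /sec; case: pselect => [h|]; last by move: (ex _ Ux').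
  by case: (cid h).
exists sec; split; first by move=> x' /secP [].
move=> x' Ux' V /= HV.
have [V' [[oV' V'y] V'V]] : exists V', open_nbhs (sec x') V' /\ V' `<=` V.
  by move: HV; rewrite nbhsE => -[V' ? ?]; exists V'.
have oW : open (pi @` (V' `&` [set y | U (pi y) /\ phi y = 0])) by apply: phiO => //; exact: A0.
have : nbhs x' (pi @` (V' `&` [set y | U (pi y) /\ phi y = 0])).
  apply: open_nbhs_nbhs; split => //; exists (sec x'); last by case: (secP _ Ux').
  by split => //; case: (secP _ Ux').
apply: filterS => x'' [z [V'z Sz] <-].
have [p1 S1] := secP _ Sz.1.
by apply: V'V; rewrite (inj _ _ S1 Sz p1).
Qed.

Lemma const_along (f : Xh -> R)
  (Hf1 : forall s : Delta1 R -> Xh, continuous s -> f (s (d1one R)) = f (s (d1zero R)))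
  (Hf3 : forall y z, pi y = pi z -> f y = f z)
  (sg : Delta1 R -> X) (csg : continuous sg) y z :
  pi y = sg (d1zero R) -> pi z = sg (d1one R) -> f y = f z.
Proof.
case: (Hbun) => [[_ surj] _ _ _].
pose lift x := sval (cid (surj x)).
have liftP : forall x, pi (lift x) = x by move=> x; rewrite /lift; case: cid.
pose sR := sg \o (@toD1 R).
have csR : continuous sR by move=> t; apply: continuous_comp; [exact: toD1_cont|exact: csg].
pose h t := f (lift (sR t)).
have loc : forall t0, \forall t \near t0, h t = h t0.
  move=> t0; have [U [oU Ux [sec [secP secC]]]] := local_section (sR t0).
  have : nbhs t0 (sR @^-1` U) by apply: csR; exact: open_nbhs_nbhs.
  move=> /nbhs_ballP [e e0 sub]; apply/nbhs_ballP; exists e => // t Ht.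
  pose l (u : Delta1 R) := t0 + set_val u * (t - t0).
  have lU : forall u, U (sR (l u)).
    move=> u; apply: sub; move: Ht; rewrite /ball /= => Ht.
    rewrite /l opprD addrA subrr sub0r normrN normrM.
    have : D1set (set_val u) by case: u => v hv; rewrite set_valE; exact: set_mem.
    rewrite /D1set /= in_itv /= => /andP[u0 u1].
    rewrite (ger0_norm u0); apply: le_lt_trans Ht.
    by rewrite distrC; apply: ler_piMl.
  have cp : continuous (sec \o sR \o l).
    have cl : continuous l.
      move=> u; apply: (@continuous_comp _ _ _ (@set_val _ (@D1set R)) (fun r : R => t0 + r * (t - t0))).
        exact: val_cont.
      apply: cvgD; first exact: cvg_cst.
      by apply: cvgMr_tmp; exact: cvg_id.
    move=> u; apply: continuous_comp; first exact: cl.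
    apply: continuous_comp; [exact: csR | exact: secC (lU u)].
  have := Hf1 _ cp; rewrite /= /l.
  have -> : set_val (d1one R) = 1 by [].
  have -> : set_val (d1zero R) = 0 by [].
  rewrite mul1r mul0r addr0 addrC subrK => E.
  have Ut : U (sR t) by apply: sub.
  rewrite /h (Hf3 (lift (sR t)) (sec (sR t))); last by rewrite liftP secP.
  rewrite (Hf3 (lift (sR t0)) (sec (sR t0))); last by rewrite liftP secP.
  exact: E.
have conn : connected [set: R] by apply/connected_intervalP.
have B1 : [set t | h t = h 0] = [set: R].
  apply: conn; first by exists 0.
    exists [set t | h t = h 0]; last by rewrite setTI.
    rewrite openE => t /= ht; apply: filterS (loc t) => u /= ->; exact: ht.
  exists (~` [set t | h t != h 0]).
    apply: open_closedC; rewrite openE => t /= ht.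
    by apply: filterS (loc t) => u /= ->.
  rewrite setTI; apply/seteqP; split => t /=; first by move=> ->; rewrite eqxx.
  by move/negP; rewrite negbK => /eqP.
have h1 : h 1 = h 0 by have : [set: R] 1 by []; rewrite -B1.
move=> py pz.
rewrite (Hf3 y (lift (sR 0))); last by rewrite liftP /sR /= toD1_0.
rewrite (Hf3 z (lift (sR 1))); last by rewrite liftP /sR /= toD1_1.
by rewrite -/(h 0) -/(h 1) h1.
Qed.
End Lift.
Theorem proposition2p11 (R : realType) (A : set R)
  (HA : A = range (fun z : int => z%:~R) \/ A = setT)
  (X : ptopologicalType) (Xh : topologicalType) (pi : Xh -> X) (T : R -> Xh -> Xh)
  (Hbun : principal_bundle A pi T) (HX : path_connected R X)
  (alpha1 alpha2 : cochain1 R X)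
  (Hc1 : is_cocycle1 alpha1) (Hc2 : is_cocycle1 alpha2)
  (theta1 theta2 : Xh -> R)
  (Ht1 : theta_for A pi T alpha1 theta1) (Ht2 : theta_for A pi T alpha2 theta2)
  (beta : X -> R)
  (Hbeta : cochain1_eq (fun s => alpha1 s - alpha2 s) (d0 beta))
  (g : X -> X) (Hg : homeomorphism g)
  (Hga : exists c : X -> R,
     cochain1_eq (fun s => alpha1 (g \o s) - alpha1 s) (d0 c))
  (gh : Xh -> Xh) (Hgh : homeomorphism gh)
  (Hcov : forall y, pi (gh y) = g (pi y)) :
  (forall (x : X) (xh : Xh), pi xh = x ->
     cvg ((fun n : nat => rho theta1 (iter n gh) xh / n%:R) @ \oo) ->
     cvg ((fun n : nat => rho theta2 (iter n gh) xh / n%:R) @ \oo) ->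
     (exists M : R, forall i : nat, `|beta (iter i g x)| <= M) ->
     lim ((fun n : nat => rho theta1 (iter n gh) xh / n%:R) @ \oo) =
     lim ((fun n : nat => rho theta2 (iter n gh) xh / n%:R) @ \oo)) /\
  (forall (mu : probability (borel X) R) (s : X -> Xh),
     (forall x, pi (s x) = x) ->
     (forall B : set (borel X), measurable B -> mu (g @^-1` B) = mu B) ->
     mu.-integrable setT (fun x => (rho theta1 gh (s x))%:E) ->
     mu.-integrable setT (fun x => (rho theta2 gh (s x))%:E) ->
     (\int[mu]_x ((beta (g x) - beta x)%:E) = 0)%E ->
     (\int[mu]_x ((rho theta1 gh (s x))%:E) =
      \int[mu]_x ((rho theta2 gh (s x))%:E))%E).
Proof.
case: (Hbun) => [[Hpi surj] [_ [_ [_ Tpi]]] [fib free] loc].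
pose f y := theta1 y - theta2 y - beta (pi y).
have Hf1 : forall s : Delta1 R -> Xh, continuous s -> f (s (d1one R)) = f (s (d1zero R)).
  move=> s cs.
  have cps : continuous (pi \o s) by move=> u; apply: continuous_comp; [exact: cs|exact: Hpi].
  have e1 := Ht1.1 s cs; have e2 := Ht2.1 s cs; have e3 := Hbeta _ cps.
  move: e1 e2 e3; rewrite /d0 /f /= => e1 e2 e3; lra.
have Hf3 : forall y z, pi y = pi z -> f y = f z.
  move=> y z pyz; have [r [Ar ez]] := fib y z pyz; subst z.
  rewrite /f Ht1.2 // Ht2.2 // Tpi //; lra.
have fc : forall y z, f y = f z.
  move=> y z; have [s [cs s0 s1]] := HX (pi y) (pi z).
  exact: (@const_along R A X Xh pi T HA Hbun f Hf1 Hf3 s cs y z (esym s0) (esym s1)).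
have itpi : forall n y, pi (iter n gh y) = iter n g (pi y).
  by elim=> [|n IH] y //=; rewrite Hcov IH.
split.
  move=> x xh pxh cu cv [M HM].
  set u := (fun n : nat => rho theta1 (iter n gh) xh / n%:R) in cu *.
  set v := (fun n : nat => rho theta2 (iter n gh) xh / n%:R) in cv *.
  pose w n := (beta (iter n g x) - beta x) / (n%:R : R).
  have uvw : u = (fun n => v n + w n).
    apply/funext => n; rewrite /u /v /w -mulrDl; congr (_ / _).
    have := fc (iter n gh xh) xh; rewrite /f /rho itpi pxh; lra.
  have hv0 : (fun n : nat => (n%:R : R)^-1) @ \oo --> 0.
    rewrite -cvg_shiftS; exact: cvg_harmonic.
  have hw : w @ \oo --> 0.
    apply: (@squeeze_cvgr _ _ _ _ (fun n => - (M + M) * (n%:R : R)^-1) (fun n => (M + M) * (n%:R : R)^-1)).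
    - apply: nearW => n; rewrite mulNr -ler_norml /w normrM normfV normr_nat.
      apply: ler_wpM2r; first by rewrite invr_ge0 ler0n.
      by apply: le_trans (ler_normB _ _) _; exact: lerD (HM n) (HM 0%N).
    - by have := cvgMl_tmp (a := - (M + M)) hv0; rewrite mulr0; apply; exact: nbhs_filter.
    - by have := cvgMl_tmp (a := M + M) hv0; rewrite mulr0; apply; exact: nbhs_filter.
  rewrite uvw; apply: cvg_lim => //.
  by have := cvgD cv hw; rewrite addr0; apply; exact: nbhs_filter.
move=> mu s hs _ i1 i2 h0.
have k1 : forall x, rho theta1 gh (s x) = rho theta2 gh (s x) + (beta (g x) - beta x).
  move=> x; have := fc (gh (s x)) (s x); rewrite /f /rho Hcov hs; lra.
have id : mu.-integrable setT (fun x => (beta (g x) - beta x)%:E).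
  apply: eq_integrable (integrableB _ i1 i2) => // x _ /=.
  by rewrite k1 -EFinB; congr EFin; lra.
rewrite (eq_integral (fun x : borel X => (rho theta2 gh (s x))%:E + (beta (g x) - beta x)%:E)%E); last first.
  by move=> x _; rewrite k1 EFinD.
by rewrite integralD // h0 adde0.
Qed.
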